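(* Let $s,k\geq 2$. Then the circular graph $G(ks+1,k)=\operatorname{Cay}(\mathbb{Z}_{ks+1},\{k,k+1,\ldots,ks+1-k\})$ is isomorphic to the $s$-stable Kneser graph $\operatorname{KG}(ks+1,k)_{s-\operatorname{stab}}$.
   Context: For integers $s,k\geq 2$ and $n\geq ks$, a subset $S\subseteq[n]=\{1,\dots,n\}$ is $s$-stable if $s\leq |i-j|\leq n-s$ for all distinct $i,j\in S$. The $s$-stable Kneser graph $\operatorname{KG}(n,k)_{s-\operatorname{stab}}$ has as vertices the $s$-stable $k$-subsets of $[n]$, two vertices being adjacent iff they are disjoint. For a group $A$ and a subset $S\subseteq A$ closed under inverses and not containing the identity, the Cayley graph $\operatorname{Cay}(A,S)$ has vertex set $A$, with $u,v$ adjacent iff $u^{-1}v\in S$ (for the cyclic group $\mathbb{Z}_n$, iff $v-u\in S$). For $n\geq 2k$, the circular graph $G(n,k)$ is $\operatorname{Cay}(\mathbb{Z}_n,\{k,k+1,\ldots,n-k\})$. *)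

(* Defs.v *)
From mathcomp Require Import all_boot all_order.
Set Implicit Arguments. Unset Strict Implicit. Unset Printing Implicit Defensive.

(* Ground set [n] is modelled as 'I_n = {0,...,n-1} (shift by one; only
   differences |i-j| matter). Z_n is also modelled by 'I_n with arithmetic mod n. *)

Definition circ_adj (n k : nat) (u v : 'I_n) : bool :=
  let d := (v + n - u) %% n in (k <= d) && (d <= n - k).

Definition natdist (i j : nat) : nat := (i - j) + (j - i).

Definition s_stable (n s : nat) (S : {set 'I_n}) : bool :=
  [forall i in S, forall j in S,
     (i != j) ==> (s <= natdist i j) && (natdist i j <= n - s)].

Definition stabKG_vertex (n k s : nat) :=
  {S : {set 'I_n} | (#|S| == k) && s_stable s S}.

Definition stabKG_adj (n k s : nat) (A B : stabKG_vertex n k s) : bool :=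
  [disjoint (val A) & (val B)].

Definition graph_iso (T1 T2 : Type) (e1 : T1 -> T1 -> bool) (e2 : T2 -> T2 -> bool) :=
  exists f : T1 -> T2, bijective f /\ forall x y, e2 (f x) (f y) = e1 x y.

(* Main.v *)
Require Import Defs.
From mathcomp Require Import all_boot all_order zify.

Lemma modeq_small a b n : a < n + n -> b < n + n -> a = b %[mod n] ->
  a = b \/ a = b + n \/ b = a + n.
Proof.
move=> ha hb E.
have n0 : 0 < n by lia.
have [qa ra] := (divn_eq a n, ltn_pmod a n0).
have [qb rb] := (divn_eq b n, ltn_pmod b n0).
have da : a %/ n < 2 by rewrite ltn_divLR //; lia.
have db : b %/ n < 2 by rewrite ltn_divLR //; lia.
move: qa qb; rewrite E.
case: (a %/ n) da => [|[|?]] // _; case: (b %/ n) db => [|[|?]] // _; lia.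
Qed.

Lemma disjointP (T : finType) (A B : {set T}) :
  reflect (forall x, x \in A -> x \in B -> False) [disjoint A & B].
Proof.
rewrite disjoint_subset; apply: (iffP subsetP) => H x hA.
  by move=> hB; have := H x hA; rewrite inE hB.
by rewrite inE; apply/negP; exact: H.
Qed.

Section Main.
Variables s k : nat.
Hypotheses (hs : 2 <= s) (hk : 2 <= k).
Local Notation n := (k * s + 1).

Lemma n_gt0 : 0 < n. Proof. lia. Qed.
Definition om (m : nat) : 'I_n := Ordinal (ltn_pmod m n_gt0).
Lemma omE m : val (om m) = m %% n. Proof. by []. Qed.

Lemma cancel_s a b : s * a = s * b %[mod n] -> a = b %[mod n].
Proof.
move=> E.
have H : (s * (n - k)) %% n = 1.
  have -> : s * (n - k) = 1 + (s - 1) * n by nia.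
  by rewrite addnC modnMDl modn_small //; lia.
have G c : c %% n = ((n - k) * ((s * c) %% n)) %% n.
  by rewrite modnMmr mulnA [(_ - k) * s]mulnC -modnMml H mul1n.
by rewrite G E -G.
Qed.

Lemma natdistE x y : natdist x y = if y <= x then x - y else y - x.
Proof. rewrite /natdist; case: leqP => h; lia. Qed.

Definition F (u : 'I_n) : {set 'I_n} := [set om (s * (u + i)) | i : 'I_k].

Lemma om_inj_k (a : nat) : injective (fun i : 'I_k => om (a + i * s)).
Proof.
move=> i j /(congr1 val) /=; rewrite -/(_ = _ %[mod n]) => /eqP.
rewrite eqn_modDl (mulnC i) (mulnC j) => /eqP /cancel_s.
have hi := ltn_ord i; have hj := ltn_ord j.
rewrite !modn_small; [exact: val_inj | nia..].
Qed.

Lemma F_alt u : F u = [set om (s * u + i * s) | i : 'I_k].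
Proof. by apply: eq_imset => i; rewrite mulnDr (mulnC i). Qed.

Lemma F_card u : #|F u| = k.
Proof. by rewrite F_alt card_imset ?card_ord //; apply: om_inj_k. Qed.

Lemma stable_seq (a : nat) : s_stable s [set om (a + i * s) | i : 'I_k].
Proof.
apply/forallP => x; apply/implyP => /imsetP [i _ ->].
apply/forallP => y; apply/implyP => /imsetP [j _ ->].
apply/implyP => ne.
suff: forall i j : 'I_k, i < j ->
   (s <= natdist (om (a + i * s)) (om (a + j * s))) &&
   (natdist (om (a + i * s)) (om (a + j * s)) <= n - s).
  move=> H; case: (ltngtP i j) => h; first exact: H.
    by rewrite /natdist addnC; apply: H.
  by move: ne; rewrite (val_inj h) eqxx.
clear ne i j => i j lij.
have hj := ltn_ord j.
set X := om (a + i * s); set Y := om (a + j * s).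
have E : X + (j - i) * s = Y %[mod n].
  rewrite /X /Y !omE modnDml -addnA -mulnDl subnKC ?modn_mod //; exact: ltnW.

have hx := ltn_ord X; have hy := ltn_ord Y.
have : (j - i) * s <= (k - 1) * s by apply: leq_mul; lia.
have : 1 * s <= (j - i) * s by apply: leq_mul; lia.
move: E; set t := (j - i) * s => E h1 h2.
have h3 : (k - 1) * s + s = k * s by nia.
rewrite mul1n in h1.
have ha : X + t < n + n by lia.
have hb : Y < n + n by lia.
have := @modeq_small _ _ _ ha hb E; rewrite natdistE.
case: (leqP Y X) => h4 [|[|]] h5; lia.
Qed.

Lemma F_ok u : (#|F u| == k) && s_stable s (F u).
Proof. by rewrite F_card eqxx F_alt stable_seq. Qed.


Lemma k_lt_n : k < n. Proof. nia. Qed.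

Lemma dE (u v : 'I_n) : (v + n - u) %% n = if u <= v then v - u else v + n - u.
Proof.
have hu := ltn_ord u; have hv := ltn_ord v.
case: leqP => h.
  have -> : v + n - u = (v - u) + n by lia.
  by rewrite modnDr modn_small //; lia.
by rewrite modn_small //; lia.
Qed.

Lemma common (u v : 'I_n) (i j : nat) : i < k -> j < k -> u + i = v + j %[mod n] ->
  ~~ [disjoint F u & F v].
Proof.
move=> hi hj E; apply/negP => /disjointP D.
have: om (s * (u + i)) \in F v.
  have -> : om (s * (u + i)) = om (s * (v + j)).
    by apply: val_inj; rewrite /= -modnMmr E modnMmr.
  by apply/imsetP; exists (Ordinal hj).
by apply: D; apply/imsetP; exists (Ordinal hi).
Qed.

Lemma F_adj u v : [disjoint F u & F v] = circ_adj k u v.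
Proof.
have hu := ltn_ord u; have hv := ltn_ord v; have hkn := k_lt_n.
rewrite /circ_adj dE; apply/idP/idP.
  move=> D; apply/negPn/negP => nc; move: D; apply/negP.
  case: (leqP u v) => h in nc *.
    case: (leqP k (v - u)) => h2 in nc.
      have h3 : n - (v - u) < k by lia.
      apply: (@common u v 0 (n - (v - u))) => //; first lia.
      have -> : v + (n - (v - u)) = u + 0 + n by lia.
      by rewrite modnDr.
    by apply: (@common u v (v - u) 0) => //; first lia; congr (_ %% _); lia.
  case: (leqP k (v + n - u)) => h2 in nc.
    have h3 : u - v < k by lia.
    apply: (@common u v 0 (u - v)) => //; first lia.
    by congr (_ %% _); lia.
  apply: (@common u v (v + n - u) 0) => //; first lia.
  have -> : u + (v + n - u) = v + 0 + n by lia.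
  by rewrite modnDr.
move=> A; apply/disjointP => x /imsetP [i _ ->] /imsetP [j _ /(congr1 val) /= E].
move/cancel_s: E => E.
have hi := ltn_ord i; have hj := ltn_ord j.
have ha : u + i < n + n by lia.
have hb : v + j < n + n by lia.
move: A; have := @modeq_small _ _ _ ha hb E.
case: (leqP u v) => h [|[|]] h5; lia.
Qed.

Lemma stabP {A : {set 'I_n}} {x y : 'I_n} : s_stable s A -> x \in A -> y \in A -> x != y ->
  s <= natdist x y <= n - s.
Proof.
move=> /forallP H hx hy ne.
by move: (H x) => /implyP /(_ hx) /forallP /(_ y) /implyP /(_ hy) /implyP /(_ ne).
Qed.

Lemma F_surj (A : {set 'I_n}) : #|A| = k -> s_stable s A -> exists u, F u = A.
Proof.
move=> cA sA.
have hsn : s < n by nia.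
set C := [set om ((x : 'I_n * 'I_s).1 + x.2) | x in setX A [set: 'I_s]].
have cC : #|C| = k * s.
  rewrite card_in_imset ?cardsX ?cA ?cardsT ?card_ord //.
  move=> [a r] [b r']; rewrite !in_setX !in_setT !andbT /= => ha hb /(congr1 val) /= E.
  have hr := ltn_ord r; have hr' := ltn_ord r'.
  have la := ltn_ord a; have lb := ltn_ord b.
  case: (eqVneq a b) => [eab|nab].
    subst b; move: E => /eqP; rewrite eqn_modDl !modn_small; try lia.
    by move=> /eqP /val_inj ->.
  have := stabP sA ha hb nab; rewrite natdistE.
  have h1 : a + r < n + n by lia.
  have h2 : b + r' < n + n by lia.
  have := @modeq_small _ _ _ h1 h2 E.
  case: (leqP b a) => h [|[|]] h5; lia.
have : #|~: C| == 1.
  have := cardsC C; rewrite card_ord cC => e; apply/eqP; lia.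
move=> /cards1P [p Cp].
have pC : p \notin C by rewrite -in_setC Cp set11.
have qC q : q != p -> q \in C.
  by move=> ne; apply/negPn; rewrite -in_setC Cp in_set1.
have hp := ltn_ord p.
have hks : (k - 1) * s + s = k * s by nia.
have claim : forall i, i < k -> om (p + 1 + i * s) \in A.
  elim=> [|i IH] hi.
  - have : om (p + 1 + 0 * s) != p.
      apply/eqP => /(congr1 val) /=; rewrite mul0n addn0.
      have h1 : p + 1 < n + n by lia.
      have h2 : p < n + n by lia.
      move=> E; rewrite -[in RHS](modn_small hp) in E.
      have := @modeq_small _ _ _ h1 h2 E; lia.
    move=> /qC /imsetP [[y r]]; rewrite in_setX /= => /andP [hy _] E.
    have hr := ltn_ord r; have hy' := ltn_ord y.
    case: (posnP r) => r0.
      suff -> : om (p + 1 + 0 * s) = y by [].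
      by rewrite E; apply: val_inj; rewrite /= r0 addn0 modn_small.
    exfalso; move: pC => /negP; apply.
    have hr1 : r - 1 < s by lia.
    apply/imsetP; exists (y, Ordinal hr1); first by rewrite in_setX hy in_setT.
    apply: val_inj; move: E => /(congr1 val) /=; rewrite mul0n addn0 => E.
    have h1 : p + 1 < n + n by lia.
    have h2 : y + r < n + n by lia.
    have := @modeq_small _ _ _ h1 h2 E => [[|[|]]] h5.
    + by rewrite modn_small; lia.
    + lia.
    + have -> : y + (r - 1) = p + n by lia.
      by rewrite modnDr modn_small.
  - have hi' : i < k by lia.
    have xA := IH hi'.
    set x := om (p + 1 + i * s) in xA.
    have hsi : i.+1 * s <= (k - 1) * s by apply: leq_mul; lia.
    have : om (p + 1 + i.+1 * s) != p.
      apply/eqP => /(congr1 val) /=.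
      have h1 : p + 1 + i.+1 * s < n + n by lia.
      have h2 : p < n + n by lia.
      move=> E; rewrite -[in RHS](modn_small hp) in E.
      have := @modeq_small _ _ _ h1 h2 E; lia.
    move=> /qC /imsetP [[y r]]; rewrite in_setX /= => /andP [hy _] E.
    have hr := ltn_ord r; have hy' := ltn_ord y; have hx := ltn_ord x.
    case: (posnP r) => r0.
      suff -> : om (p + 1 + i.+1 * s) = y by [].
      by rewrite E; apply: val_inj; rewrite /= r0 addn0 modn_small.
    exfalso.
    have E2 : x + s = y + r %[mod n].
      move: E => /(congr1 val) /= <-.
      by rewrite /x /= modnDml mulSn; congr (_ %% _); lia.
    have h1 : x + s < n + n by lia.
    have h2 : y + r < n + n by lia.
    case: (eqVneq x y) => [exy|nxy].
      move: E2; rewrite exy => /eqP; rewrite eqn_modDl !modn_small; lia.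
    have := stabP sA xA hy nxy; rewrite natdistE.
    have := @modeq_small _ _ _ h1 h2 E2.
    case: (leqP y x) => h [|[|]] h5; lia.
set B := [set om (p + 1 + i * s) | i : 'I_k].
have BA : B = A.
  apply/eqP; rewrite eqEcard; apply/andP; split.
    by apply/subsetP => z /imsetP [i _ ->]; apply: claim.
  by rewrite card_imset ?card_ord ?cA //; apply: om_inj_k.
exists (om ((p + 1) * (n - k))); rewrite F_alt -BA; apply: eq_imset => i.
apply: val_inj => /=.
have key : s * ((p + 1) * (n - k)) = (p + 1) + ((p + 1) * (s - 1)) * n by nia.
rewrite -modnDml modnMmr key modnDml.
have -> : p + 1 + (p + 1) * (s - 1) * n + i * s = (p + 1) * (s - 1) * n + (p + 1 + i * s)
  by lia.
by rewrite modnMDl.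
Qed.

Lemma F_inj : injective F.
Proof.
have hsn : k + k <= n by nia.
have mem (u v : 'I_n) : F u = F v -> exists2 j, j < k & u = v + j %[mod n].
  move=> E; have : om (s * (u + 0)) \in F v by rewrite -E; apply/imsetP; exists (Ordinal (ltnW hk)).
  move=> /imsetP [j _ /(congr1 val) /= /cancel_s]; rewrite addn0 => e.
  by exists j.
move=> u v E.
have [j hj e1] := mem _ _ E; have [i hi e2] := mem _ _ (esym E).
have hu := ltn_ord u; have hv := ltn_ord v.
have : u + 0 = u + (i + j) %[mod n] by rewrite addn0 addnA -modnDml -e2 modnDml.
move=> /eqP; rewrite eqn_modDl mod0n (@modn_small (i + j)); last lia.
move=> /eqP ij.
have j0 : j = 0 by lia.
move: e1; rewrite j0 addn0 !modn_small // => ?; exact: val_inj.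
Qed.

End Main.

Theorem mainTheorem7 (s k : nat) (hs : 2 <= s) (hk : 2 <= k) :
  graph_iso (@circ_adj (k * s + 1) k) (@stabKG_adj (k * s + 1) k s).
Proof.
pose f (u : 'I_(k * s + 1)) : stabKG_vertex (k * s + 1) k s := exist _ (F s k hs hk u) (@F_ok s k hs hk u).
pose u0 : 'I_(k * s + 1) := Ordinal (@n_gt0 s k hs hk).
pose g (S : stabKG_vertex (k * s + 1) k s) := odflt u0 [pick u | f u == S].
exists f; split.
  exists g.
    move=> u; rewrite /g; case: pickP => [u' /eqP e|/(_ u)]; last by rewrite eqxx.
    by apply: (@F_inj s k hs hk); move: e => /(congr1 val).
  move=> S; rewrite /g; case: pickP => [u' /eqP //|].
  have /andP [/eqP cS sS] := valP S.
  have [u Fu] := @F_surj s k hs hk (val S) cS sS.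
  have fuS : f u = S by apply: val_inj; exact: Fu.
  by move=> /(_ u); rewrite fuS eqxx.
move=> x y; exact: (@F_adj s k hs hk).
Qed.
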